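(* Consider the model below with $\min\{M,M_f,N\}<1$ and $\epsilon_2\ge0$, and fix all parameters other than $\epsilon_1$. (i) There exists $\bar{\epsilon}_{BR}\in[-\infty,\infty)$, depending only on the model parameters, such that for every $\epsilon_1\in\mathbb{R}$ a bounded-rationality equilibrium (BRE) exists if and only if $\epsilon_1\ge\bar{\epsilon}_{BR}$. (ii) If $(M-1)(1-M_f\beta)+\lambda\sigma N<0$, then $\bar{\epsilon}_{BR}=-\infty$, i.e. a BRE exists for every $\epsilon_1\in\mathbb{R}$.
   Context: Parameters: $0<\beta<1$, $\sigma,\lambda,\mu>0$, $\psi>1$, $p,q\in(0,1]$, $M,M_f,N\in(0,1]$. The shock $\epsilon_t$ is a two-state Markov chain on $\{\epsilon_1,\epsilon_2\}$ with $\Pr(\epsilon_{t+1}=\epsilon_1\mid\epsilon_t=\epsilon_1)=p$, $\Pr(\epsilon_{t+1}=\epsilon_2\mid\epsilon_t=\epsilon_2)=q$. Model: $x_t=M E_t x_{t+1}-\sigma(i_t-N E_t\pi_{t+1})+\epsilon_t$, $\pi_t=\lambda x_t+M_f\beta E_t\pi_{t+1}$, $i_t=\max\{\psi\pi_t,-\mu\}$. A BRE is a pair $Y_j=(x_j,\pi_j)\in\mathbb{R}^2$, $j=1,2$, such that for $j=1,2$, with $i_j=\max\{\psi\pi_j,-\mu\}$: $x_j=Mx^e_j-\sigma(i_j-N\pi^e_j)+\epsilon_j$, $\pi_j=\lambda x_j+M_f\beta\pi^e_j$, where $(x^e_1,\pi^e_1)=pY_1+(1-p)Y_2$, $(x^e_2,\pi^e_2)=(1-q)Y_1+qY_2$.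 *)

(* Defs.v *)
From Stdlib Require Import Reals.
From Coquelicot Require Import Coquelicot.
Open Scope R_scope.

Definition irate (psi mu pi : R) : R := Rmax (psi * pi) (- mu).

Definition is_BRE (beta sigma lambda mu psi p q M Mf N eps1 eps2 : R)
  (x1 pi1 x2 pi2 : R) : Prop :=
  let xe1 := p * x1 + (1 - p) * x2 in
  let pie1 := p * pi1 + (1 - p) * pi2 in
  let xe2 := (1 - q) * x1 + q * x2 in
  let pie2 := (1 - q) * pi1 + q * pi2 in
  x1 = M * xe1 - sigma * (irate psi mu pi1 - N * pie1) + eps1 /\
  pi1 = lambda * x1 + Mf * beta * pie1 /\
  x2 = M * xe2 - sigma * (irate psi mu pi2 - N * pie2) + eps2 /\
  pi2 = lambda * x2 + Mf * beta * pie2.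

Definition BRE_exists (beta sigma lambda mu psi p q M Mf N eps1 eps2 : R) : Prop :=
  exists x1 pi1 x2 pi2 : R,
    is_BRE beta sigma lambda mu psi p q M Mf N eps1 eps2 x1 pi1 x2 pi2.

(* Main.v *)
Require Import Defs.
From Stdlib Require Import Reals Lra Psatz Classical.
From Coquelicot Require Import Coquelicot.
Open Scope R_scope.

Lemma cont_ext (f g : R -> R) : continuity f -> (forall x, f x = g x) -> continuity g.
Proof. intros Hf H x. apply continuity_pt_locally_ext with (f := f) (a := 1); [lra| intros; apply H| apply Hf]. Qed.

Lemma cont_aff (a b : R) : continuity (fun t => a*t+b).
Proof.
  apply cont_ext with (f := plus_fct (mult_real_fct a id) (fct_cte b)).
  - apply continuity_plus. apply continuity_scal. apply derivable_continuous, derivable_id.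
    apply continuity_const. intros x y; reflexivity.
  - intros; reflexivity.
Qed.

Lemma cont_lin2 (u v : R -> R) (a b : R) : continuity u -> continuity v ->
  continuity (fun t => a * u t + b * v t).
Proof.
  intros Hu Hv. apply cont_ext with (f := plus_fct (mult_real_fct a u) (mult_real_fct b v)).
  - apply continuity_plus; apply continuity_scal; assumption.
  - intros; reflexivity.
Qed.

Lemma Rmax_abs (a b : R) : Rmax a b = (a + b + Rabs (a - b)) / 2.
Proof. unfold Rmax; destruct (Rle_dec a b); unfold Rabs; destruct (Rcase_abs (a-b)); lra. Qed.

Lemma cont_max (u : R -> R) (c : R) : continuity u -> continuity (fun t => Rmax (u t) c).
Proof.
  intros Hu.
  apply cont_ext with (f := fun t => (/2) * (u t + c) + (/2) * Rabs (u t + -1 * c)).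
  - apply cont_lin2.
    + apply cont_ext with (f := fun t => 1 * u t + c * 1).
      * apply cont_lin2; auto. apply continuity_const; intros x y; reflexivity.
      * intros; ring.
    + apply cont_ext with (f := comp Rabs (fun t => 1 * u t + (-1*c) * 1)).
      * apply continuity_comp; [|apply Rcontinuity_abs]. apply cont_lin2; auto.
        apply continuity_const; intros x y; reflexivity.
      * intros; unfold comp; f_equal; ring.
  - intros; rewrite Rmax_abs; replace (u x + -1*c) with (u x - c) by ring; field.
Qed.

Lemma cont_irate (psi mu : R) (u : R -> R) : continuity u -> continuity (fun t => irate psi mu (u t)).
Proof.
  intros Hu. unfold irate. apply cont_max.
  apply cont_ext with (f := fun t => psi * u t + 0 * u t); [apply cont_lin2; auto|intros; ring].
Qed.

Definition EAL (f : R -> R) := exists T a b, forall t, t <= T -> f t = a*t+b.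
Definition EAR (f : R -> R) := exists T a b, forall t, T <= t -> f t = a*t+b.

Lemma EAL_ext f g : EAL f -> (forall x, f x = g x) -> EAL g.
Proof. intros [T [a [b H]]] He; exists T, a, b; intros; rewrite <- He; auto. Qed.
Lemma EAR_ext f g : EAR f -> (forall x, f x = g x) -> EAR g.
Proof. intros [T [a [b H]]] He; exists T, a, b; intros; rewrite <- He; auto. Qed.

Lemma EAL_comb u v a b c d : EAL u -> EAL v -> EAL (fun t => a * u t + b * v t + c * t + d).
Proof.
  intros [T1 [a1 [b1 H1]]] [T2 [a2 [b2 H2]]].
  exists (Rmin T1 T2), (a*a1 + b*a2 + c), (a*b1+b*b2+d). intros t Ht.
  rewrite H1, H2. ring. apply Rle_trans with (1:=Ht); apply Rmin_r. apply Rle_trans with (1:=Ht); apply Rmin_l.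
Qed.
Lemma EAR_comb u v a b c d : EAR u -> EAR v -> EAR (fun t => a * u t + b * v t + c * t + d).
Proof.
  intros [T1 [a1 [b1 H1]]] [T2 [a2 [b2 H2]]].
  exists (Rmax T1 T2), (a*a1 + b*a2 + c), (a*b1+b*b2+d). intros t Ht.
  rewrite H1, H2. ring. apply Rle_trans with (2:=Ht); apply Rmax_r. apply Rle_trans with (2:=Ht); apply Rmax_l.
Qed.
Lemma EAL_id : EAL (fun t => t).
Proof. exists 0, 1, 0; intros; ring. Qed.
Lemma EAR_id : EAR (fun t => t).
Proof. exists 0, 1, 0; intros; ring. Qed.

Lemma EAL_max u c : EAL u -> EAL (fun t => Rmax (u t) c).
Proof.
  intros [T [a [b H]]].
  destruct (Rtotal_order a 0) as [Ha|[Ha|Ha]].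
  - exists (Rmin T ((c-b)/a)), a, b. intros t Ht.
    assert (t <= T) by (apply Rle_trans with (1:=Ht); apply Rmin_l).
    assert (t <= (c-b)/a) by (apply Rle_trans with (1:=Ht); apply Rmin_r).
    assert (a*((c-b)/a) <= a*t) by (apply Rmult_le_compat_neg_l; lra).
    replace (a*((c-b)/a)) with (c-b) in H2 by (field; lra).
    rewrite H by auto. apply Rmax_left. lra.
  - exists T, 0, (Rmax b c). intros t Ht. rewrite H by auto. subst a. replace (0*t+b) with b by ring; ring.
  - exists (Rmin T ((c-b)/a)), 0, c. intros t Ht.
    assert (t <= T) by (apply Rle_trans with (1:=Ht); apply Rmin_l).
    assert (t <= (c-b)/a) by (apply Rle_trans with (1:=Ht); apply Rmin_r).
    assert (a*t <= a*((c-b)/a)) by (apply Rmult_le_compat_l; lra).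
    replace (a*((c-b)/a)) with (c-b) in H2 by (field; lra).
    rewrite H by auto. rewrite Rmax_right; lra.
Qed.
Lemma EAR_max u c : EAR u -> EAR (fun t => Rmax (u t) c).
Proof.
  intros [T [a [b H]]].
  destruct (Rtotal_order a 0) as [Ha|[Ha|Ha]].
  - exists (Rmax T ((c-b)/a)), 0, c. intros t Ht.
    assert (T <= t) by (apply Rle_trans with (2:=Ht); apply Rmax_l).
    assert ((c-b)/a <= t) by (apply Rle_trans with (2:=Ht); apply Rmax_r).
    assert (a*t <= a*((c-b)/a)) by (apply Rmult_le_compat_neg_l; lra).
    replace (a*((c-b)/a)) with (c-b) in H2 by (field; lra).
    rewrite H by auto. rewrite Rmax_right; lra.
  - exists T, 0, (Rmax b c). intros t Ht. rewrite H by auto. subst a. replace (0*t+b) with b by ring; ring.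
  - exists (Rmax T ((c-b)/a)), a, b. intros t Ht.
    assert (T <= t) by (apply Rle_trans with (2:=Ht); apply Rmax_l).
    assert ((c-b)/a <= t) by (apply Rle_trans with (2:=Ht); apply Rmax_r).
    assert (a*((c-b)/a) <= a*t) by (apply Rmult_le_compat_l; lra).
    replace (a*((c-b)/a)) with (c-b) in H2 by (field; lra).
    rewrite H by auto. apply Rmax_left. lra.
Qed.

Lemma EAL_irate psi mu u : EAL u -> EAL (fun t => irate psi mu (u t)).
Proof.
  intros H. unfold irate. apply EAL_max.
  apply EAL_ext with (f := fun t => psi * u t + 0 * u t + 0 * t + 0); [apply EAL_comb; auto|intros; ring].
Qed.
Lemma EAR_irate psi mu u : EAR u -> EAR (fun t => irate psi mu (u t)).
Proof.
  intros H. unfold irate. apply EAR_max.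
  apply EAR_ext with (f := fun t => psi * u t + 0 * u t + 0 * t + 0); [apply EAR_comb; auto|intros; ring].
Qed.

Lemma min_attained (f : R -> R) (c0 : R) : continuity f -> EAL f -> EAR f ->
  (forall t, c0 <= f t) -> exists ts, forall t, f ts <= f t.
Proof.
  intros Hc [T1' [a1 [b1 H1']]] [T2 [a2 [b2 H2]]] Hb.
  set (T1 := Rmin T1' T2).
  assert (H1 : forall t, t <= T1 -> f t = a1*t+b1).
  { intros t Ht; apply H1'. apply Rle_trans with (1:=Ht); apply Rmin_l. }
  assert (HT : T1 <= T2) by apply Rmin_r.
  assert (Ha1 : a1 <= 0).
  { destruct (Rle_dec a1 0) as [|Hn]; auto. exfalso.
    set (t := Rmin T1 ((c0 - 1 - b1)/a1)).
    assert (t <= T1) by apply Rmin_l.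
    assert (t <= (c0 - 1 - b1)/a1) by apply Rmin_r.
    assert (a1*t <= a1*((c0-1-b1)/a1)) by (apply Rmult_le_compat_l; lra).
    replace (a1*((c0-1-b1)/a1)) with (c0-1-b1) in H3 by (field; lra).
    specialize (Hb t). rewrite H1 in Hb by auto. lra. }
  assert (Ha2 : 0 <= a2).
  { destruct (Rle_dec 0 a2) as [|Hn]; auto. exfalso.
    set (t := Rmax T2 ((c0 - 1 - b2)/a2)).
    assert (T2 <= t) by apply Rmax_l.
    assert ((c0 - 1 - b2)/a2 <= t) by apply Rmax_r.
    assert (a2*t <= a2*((c0-1-b2)/a2)) by (apply Rmult_le_compat_neg_l; lra).
    replace (a2*((c0-1-b2)/a2)) with (c0-1-b2) in H3 by (field; lra).
    specialize (Hb t). rewrite H2 in Hb by auto. lra. }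
  destruct (continuity_ab_min f T1 T2 HT (fun c _ => Hc c)) as [m [Hm Hm2]].
  exists m. intros t.
  destruct (Rle_dec t T1).
  - apply Rle_trans with (f T1). apply Hm; lra.
    rewrite (H1 t), (H1 T1) by lra. nra.
  - destruct (Rle_dec T2 t).
    + apply Rle_trans with (f T2). apply Hm; lra.
      rewrite (H2 t), (H2 T2) by lra. nra.
    + apply Hm; lra.
Qed.

Definition E1a K11 A sig psi mu pi1 pi2 := K11*pi1 + sig*irate psi mu pi1 - A*pi2.
Definition E2a K22 B sig psi mu pi1 pi2 := - B*pi1 + K22*pi2 + sig*irate psi mu pi2.
Definition Sa K11 K22 A B sig psi mu e2 e :=
  exists pi1 pi2, E1a K11 A sig psi mu pi1 pi2 = e /\ E2a K22 B sig psi mu pi1 pi2 = e2.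

Lemma irate_U psi mu x : -mu <= psi*x -> irate psi mu x = psi*x.
Proof. intros; unfold irate; apply Rmax_left; lra. Qed.
Lemma irate_Z psi mu x : psi*x <= -mu -> irate psi mu x = -mu.
Proof. intros; unfold irate; apply Rmax_right; lra. Qed.

Definition hyps K11 K22 A B sig psi mu e2 :=
  0 < sig /\ 0 < mu /\ 1 < psi /\ 0 <= A /\ 0 <= B /\ 0 < K11 + sig*psi /\ 0 < K22 + sig*psi /\
  0 < (K11+sig*psi)*(K22+sig*psi) - A*B /\ 0 <= e2.

Lemma Sa_nonneg K11 K22 A B sig psi mu e2 e : hyps K11 K22 A B sig psi mu e2 -> 0 <= e ->
  Sa K11 K22 A B sig psi mu e2 e.
Proof.
  intros (Hs&Hm&Hp&HA&HB&H1&H2&HD&He2) He.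
  set (D := (K11+sig*psi)*(K22+sig*psi) - A*B).
  exists (((K22+sig*psi)*e + A*e2)/D), ((B*e + (K11+sig*psi)*e2)/D).
  assert (0 <= ((K22+sig*psi)*e + A*e2)/D) by (apply Rdiv_le_0_compat; [apply Rplus_le_le_0_compat; apply Rmult_le_pos; lra|exact HD]).
  assert (0 <= (B*e + (K11+sig*psi)*e2)/D) by (apply Rdiv_le_0_compat; [apply Rplus_le_le_0_compat; apply Rmult_le_pos; lra|exact HD]).
  unfold E1a, E2a. rewrite !irate_U by nra. split; unfold D in *; field; lra.
Qed.

Definition psi1 K22 B sig psi mu e2 t := (K22*t + sig*irate psi mu t - e2)/B.
Definition fa K11 K22 A B sig psi mu e2 t :=
  E1a K11 A sig psi mu (psi1 K22 B sig psi mu e2 t) t.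

Lemma Sa_fa K11 K22 A B sig psi mu e2 e : 0 < B ->
  (Sa K11 K22 A B sig psi mu e2 e <-> exists t, fa K11 K22 A B sig psi mu e2 t = e).
Proof.
  intros HB; split.
  - intros [p1 [p2 [H1 H2]]]. exists p2. unfold fa.
    replace (psi1 K22 B sig psi mu e2 p2) with p1; auto.
    unfold psi1. unfold E2a in H2. rewrite <- H2. field. lra.
  - intros [t Ht]. exists (psi1 K22 B sig psi mu e2 t), t. split; auto.
    unfold E2a, psi1. field. lra.
Qed.

Lemma fa_cont K11 K22 A B sig psi mu e2 : continuity (fa K11 K22 A B sig psi mu e2).
Proof.
  assert (Hi : continuity (fun t => irate psi mu t)).
  { apply cont_irate with (u := fun t => t). apply cont_ext with (f := fun t => 1*t+0); [apply cont_aff|intros; ring]. }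
  assert (Hp : continuity (psi1 K22 B sig psi mu e2)).
  { apply cont_ext with (f := fun t => (sig/B) * irate psi mu t + 1 * (K22/B*t + - e2/B)).
    apply cont_lin2; auto. apply cont_aff.
    intros; unfold psi1, Rdiv; ring. }
  unfold fa, E1a.
  apply cont_ext with (f := fun t => 1 * (K11 * psi1 K22 B sig psi mu e2 t + sig * irate psi mu (psi1 K22 B sig psi mu e2 t)) + 1 * ((-A)*t+0)).
  2: intros; ring.
  apply cont_lin2; [|apply cont_aff]. apply cont_lin2; auto. apply cont_irate; auto.
Qed.

Lemma fa_EAL K11 K22 A B sig psi mu e2 : EAL (fa K11 K22 A B sig psi mu e2).
Proof.
  assert (Hi : EAL (fun t => irate psi mu t)) by (apply EAL_irate with (u := fun t => t), EAL_id).
  assert (Hp : EAL (psi1 K22 B sig psi mu e2)).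
  { apply EAL_ext with (f := fun t => (sig/B) * irate psi mu t + 0 * irate psi mu t + (K22/B)*t + - e2/B).
    apply EAL_comb; auto. intros; unfold psi1, Rdiv; ring. }
  unfold fa, E1a.
  apply EAL_ext with (f := fun t => K11 * psi1 K22 B sig psi mu e2 t + sig * irate psi mu (psi1 K22 B sig psi mu e2 t) + (-A)*t + 0).
  2: intros; ring.
  apply EAL_comb; auto. apply EAL_irate; auto.
Qed.
Lemma fa_EAR K11 K22 A B sig psi mu e2 : EAR (fa K11 K22 A B sig psi mu e2).
Proof.
  assert (Hi : EAR (fun t => irate psi mu t)) by (apply EAR_irate with (u := fun t => t), EAR_id).
  assert (Hp : EAR (psi1 K22 B sig psi mu e2)).
  { apply EAR_ext with (f := fun t => (sig/B) * irate psi mu t + 0 * irate psi mu t + (K22/B)*t + - e2/B).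
    apply EAR_comb; auto. intros; unfold psi1, Rdiv; ring. }
  unfold fa, E1a.
  apply EAR_ext with (f := fun t => K11 * psi1 K22 B sig psi mu e2 t + sig * irate psi mu (psi1 K22 B sig psi mu e2 t) + (-A)*t + 0).
  2: intros; ring.
  apply EAR_comb; auto. apply EAR_irate; auto.
Qed.

Definition dich (S : R -> Prop) := (forall e, S e) \/ (exists c, forall e, S e <-> c <= e).

Lemma dich_Bpos K11 K22 A B sig psi mu e2 : hyps K11 K22 A B sig psi mu e2 -> 0 < B ->
  dich (Sa K11 K22 A B sig psi mu e2).
Proof.
  intros H HB.
  set (f := fa K11 K22 A B sig psi mu e2).
  assert (Hf : forall e, Sa K11 K22 A B sig psi mu e2 e <-> exists t, f t = e) by (intros; apply Sa_fa; auto).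
  assert (Hc : continuity f) by apply fa_cont.
  assert (Hup : forall e e', Sa K11 K22 A B sig psi mu e2 e -> e <= e' -> Sa K11 K22 A B sig psi mu e2 e').
  { intros e e' He Hle. destruct (Rle_dec 0 e'). apply Sa_nonneg; auto.
    destruct (Hf e) as [Hf1 _]. destruct (Hf1 He) as [t Ht].
    destruct (Hf 0) as [Hg1 _]. destruct (Hg1 (Sa_nonneg _ _ _ _ _ _ _ _ _ H (Rle_refl 0))) as [t0 Ht0].
    apply Hf.
    set (g := fun x => 1 * f x + (-e') * 1).
    assert (Hgc : continuity g) by (apply cont_lin2; auto; apply continuity_const; intros x y; reflexivity).
    destruct (Rle_dec t t0).
    - destruct (IVT_cor g t t0 Hgc r) as [z [_ Hz]]. unfold g; rewrite Ht, Ht0. nra.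
      exists z. unfold g in Hz. lra.
    - destruct (IVT_cor g t0 t Hgc) as [z [_ Hz]]. lra. unfold g; rewrite Ht, Ht0. nra.
      exists z. unfold g in Hz. lra. }
  destruct (classic (forall e, Sa K11 K22 A B sig psi mu e2 e)) as [Hall|Hn]; [left; auto|right].
  destruct (not_all_ex_not _ _ Hn) as [e0 He0].
  assert (Hlb : forall t, e0 <= f t).
  { intros t. destruct (Rle_dec e0 (f t)); auto. exfalso. apply He0.
    apply Hup with (f t). apply Hf; eauto. lra. }
  destruct (min_attained f e0 Hc (fa_EAL _ _ _ _ _ _ _ _) (fa_EAR _ _ _ _ _ _ _ _) Hlb) as [ts Hts].
  exists (f ts). intros e; split.
  - intros He. apply Hf in He. destruct He as [t <-]. auto.
  - intros Hle. apply Hup with (f ts); auto. apply Hf; eauto.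
Qed.

Lemma le_div_r a b d : 0 < d -> a*d <= b -> a <= b/d.
Proof. intros. apply Rmult_le_reg_r with d; auto. unfold Rdiv; rewrite Rmult_assoc, Rinv_l, Rmult_1_r; lra. Qed.
Lemma div_le_r a b d : 0 < d -> b <= a*d -> b/d <= a.
Proof. intros. apply Rmult_le_reg_r with d; auto. unfold Rdiv; rewrite Rmult_assoc, Rinv_l, Rmult_1_r; lra. Qed.

Lemma dich_B0 K11 K22 A sig psi mu e2 : hyps K11 K22 A 0 sig psi mu e2 ->
  (0 < K11 -> forall e, Sa K11 K22 A 0 sig psi mu e2 e) /\ dich (Sa K11 K22 A 0 sig psi mu e2).
Proof.
  intros (Hs&Hm&Hp&HA&HB&H1&H2&HD&He2).
  set (tU := e2 / (K22 + sig*psi)).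
  assert (HtU : 0 <= tU) by (apply Rdiv_le_0_compat; lra).
  assert (HE2 : forall s, E2a K22 0 sig psi mu s tU = e2).
  { intros s. unfold E2a. rewrite irate_U by nra. unfold tU. field. lra. }
  set (t0 := -mu/psi).
  assert (Ht0 : psi * t0 = -mu) by (unfold t0; field; lra).
  assert (Hrel : forall x, -mu <= psi * x -> t0 <= x).
  { intros x Hx. apply Rmult_le_reg_l with psi; lra. }
  assert (Hrel2 : forall x, psi * x <= -mu -> x <= t0).
  { intros x Hx. apply Rmult_le_reg_l with psi; lra. }
  assert (Hup : forall s, K11 * t0 - sig*mu <= s -> Sa K11 K22 A 0 sig psi mu e2 (s - A*tU)).
  { intros s Hs'. exists (s/(K11+sig*psi)), tU. split; auto.
    assert (t0 <= s/(K11+sig*psi)) by (apply le_div_r; nra).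
    unfold E1a. rewrite irate_U by nra. field; lra. }
  assert (Hpos : 0 < K11 -> forall e, Sa K11 K22 A 0 sig psi mu e2 e).
  { intros HK e. set (v := e + A*tU). replace e with (v - A*tU) by (unfold v; ring).
    destruct (Rle_dec (K11 * t0 - sig*mu) v). apply Hup; auto.
    exists ((v + sig*mu)/K11), tU. split; auto.
    assert ((v + sig*mu)/K11 <= t0) by (apply div_le_r; nra).
    unfold E1a. rewrite irate_Z by nra. field; lra. }
  split; auto.
  destruct (Rlt_dec 0 K11) as [HK|HK]; [left; auto|right].
  exists (K11 * t0 - sig*mu - A*tU). intros e; split.
  - intros [s1 [t [Ha Hb]]]. unfold E2a, E1a in *.
    assert (t <= tU).
    { destruct (Rle_dec (-mu) (psi*t)).
      - rewrite irate_U in Hb by auto. apply Req_le. unfold tU. rewrite <- Hb. field. lra.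
      - nra. }
    destruct (Rle_dec (-mu) (psi*s1)).
    + rewrite irate_U in Ha by auto. specialize (Hrel _ r). nra.
    + rewrite irate_Z in Ha by lra. assert (s1 <= t0) by (apply Hrel2; lra). nra.
  - intros He. replace e with ((e + A*tU) - A*tU) by ring. apply Hup. lra.
Qed.

Lemma up_Bpos K11 K22 A B sig psi mu e2 : hyps K11 K22 A B sig psi mu e2 -> 0 < B ->
  forall e e', Sa K11 K22 A B sig psi mu e2 e -> e <= e' -> Sa K11 K22 A B sig psi mu e2 e'.
Proof.
  intros H HB.
  set (f := fa K11 K22 A B sig psi mu e2).
  assert (Hf : forall e, Sa K11 K22 A B sig psi mu e2 e <-> exists t, f t = e) by (intros; apply Sa_fa; auto).
  assert (Hc : continuity f) by apply fa_cont.
  { intros e e' He Hle. destruct (Rle_dec 0 e'). apply Sa_nonneg; auto.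
    destruct (Hf e) as [Hf1 _]. destruct (Hf1 He) as [t Ht].
    destruct (Hf 0) as [Hg1 _]. destruct (Hg1 (Sa_nonneg _ _ _ _ _ _ _ _ _ H (Rle_refl 0))) as [t0 Ht0].
    apply Hf.
    set (g := fun x => 1 * f x + (-e') * 1).
    assert (Hgc : continuity g) by (apply cont_lin2; auto; apply continuity_const; intros x y; reflexivity).
    destruct (Rle_dec t t0).
    - destruct (IVT_cor g t t0 Hgc r) as [z [_ Hz]]. unfold g; rewrite Ht, Ht0. nra.
      exists z. unfold g in Hz. lra.
    - destruct (IVT_cor g t0 t Hgc) as [z [_ Hz]]. lra. unfold g; rewrite Ht, Ht0. nra.
      exists z. unfold g in Hz. lra. }
Qed.

Lemma le_div_mul d x y : 0 < d -> x <= y/d -> d*x <= y.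
Proof. intros. apply Rmult_le_compat_l with (r := d) in H0; [|lra].
  replace (d*(y/d)) with y in H0 by (field; lra). exact H0. Qed.

Lemma all_Bpos K11 K22 A B sig psi mu e2 : hyps K11 K22 A B sig psi mu e2 -> 0 < B ->
  0 < K11 -> 0 < K22 -> 0 < K11*K22 - A*B -> forall e, Sa K11 K22 A B sig psi mu e2 e.
Proof.
  intros H HB HK1 HK2 HD0 e.
  pose proof H as (Hs&Hm&Hp&HA&_&H1&H2&HD&He2).
  set (D0 := K11*K22 - A*B) in *.
  set (t0 := -mu/psi).
  assert (Ht0 : psi * t0 = -mu) by (unfold t0; field; lra).
  assert (Hrel2 : forall x, x <= t0 -> psi * x <= -mu).
  { intros x Hx. rewrite <- Ht0. apply Rmult_le_compat_l; lra. }
  set (th1 := (t0*D0 - A*(e2+sig*mu))/K22 - sig*mu).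
  set (th2 := (t0*D0 - K11*(e2+sig*mu))/B - sig*mu).
  set (e' := Rmin e (Rmin th1 th2)).
  assert (E1 : e' <= e) by apply Rmin_l.
  assert (E2 : e' <= th1) by (apply Rle_trans with (Rmin th1 th2); [apply Rmin_r|apply Rmin_l]).
  assert (E3 : e' <= th2) by (apply Rle_trans with (Rmin th1 th2); [apply Rmin_r|apply Rmin_r]).
  apply up_Bpos with e'; auto.
  set (p1 := (K22*(e'+sig*mu) + A*(e2+sig*mu))/D0).
  set (p2 := (B*(e'+sig*mu) + K11*(e2+sig*mu))/D0).
  assert (Hp1 : p1 <= t0).
  { apply div_le_r; auto.
    assert (K22*(e'+sig*mu) <= t0*D0 - A*(e2+sig*mu)) by (apply le_div_mul; auto; unfold th1 in E2; lra). lra. }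
  assert (Hp2 : p2 <= t0).
  { apply div_le_r; auto.
    assert (B*(e'+sig*mu) <= t0*D0 - K11*(e2+sig*mu)) by (apply le_div_mul; auto; unfold th2 in E3; lra). lra. }
  exists p1, p2. unfold E1a, E2a. rewrite !irate_Z by auto.
  unfold p1, p2, D0 in *. split; field; lra.
Qed.

Definition cc beta sigma lambda p q M Mf N :=
  (M + Mf*beta - M*(Mf*beta)*(p+q))/lambda + sigma*N.
Definition K11 beta sigma lambda p q M Mf N :=
  ((1-Mf*beta*p)*(1-M*p) + M*(Mf*beta)*(1-p)*(1-q))/lambda - sigma*N*p.
Definition K22 beta sigma lambda p q M Mf N :=
  ((1-Mf*beta*q)*(1-M*q) + M*(Mf*beta)*(1-p)*(1-q))/lambda - sigma*N*q.

Lemma BRE_iff beta sigma lambda mu psi p q M Mf N eps1 eps2 : lambda <> 0 ->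
  (BRE_exists beta sigma lambda mu psi p q M Mf N eps1 eps2 <->
   Sa (K11 beta sigma lambda p q M Mf N) (K22 beta sigma lambda p q M Mf N)
      ((1-p)*cc beta sigma lambda p q M Mf N) ((1-q)*cc beta sigma lambda p q M Mf N)
      sigma psi mu eps2 eps1).
Proof.
  intros Hl. unfold BRE_exists, Sa, is_BRE, E1a, E2a, K11, K22, cc. split.
  - intros [x1 [pi1 [x2 [pi2 [H1 [H2 [H3 H4]]]]]]]. exists pi1, pi2.
    set (I1 := irate psi mu pi1) in *. set (I2 := irate psi mu pi2) in *.
    assert (Hx1 : x1 = (pi1 - Mf*beta*(p*pi1 + (1-p)*pi2))/lambda) by (field_simplify_eq; [lra|auto]).
    assert (Hx2 : x2 = (pi2 - Mf*beta*((1-q)*pi1 + q*pi2))/lambda) by (field_simplify_eq; [lra|auto]).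
    clear H2 H4. subst x1 x2. split.
    + assert (eps1 = (pi1 - Mf * beta * (p * pi1 + (1 - p) * pi2)) / lambda - M * (p * ((pi1 - Mf * beta * (p * pi1 + (1 - p) * pi2)) / lambda) + (1 - p) * ((pi2 - Mf * beta * ((1 - q) * pi1 + q * pi2)) / lambda)) + sigma * (I1 - N * (p * pi1 + (1 - p) * pi2))) by lra.
      rewrite H. field; auto.
    + assert (eps2 = (pi2 - Mf * beta * ((1 - q) * pi1 + q * pi2)) / lambda - M * ((1 - q) * ((pi1 - Mf * beta * (p * pi1 + (1 - p) * pi2)) / lambda) + q * ((pi2 - Mf * beta * ((1 - q) * pi1 + q * pi2)) / lambda)) + sigma * (I2 - N * ((1 - q) * pi1 + q * pi2))) by lra.
      rewrite H. field; auto.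
  - intros [pi1 [pi2 [H1 H2]]].
    exists ((pi1 - Mf*beta*(p*pi1 + (1-p)*pi2))/lambda), pi1,
           ((pi2 - Mf*beta*((1-q)*pi1 + q*pi2))/lambda), pi2.
    rewrite <- H1, <- H2. repeat split; field; auto.
Qed.

Lemma det_id beta sigma lambda p q M Mf N s : lambda <> 0 ->
  (K11 beta sigma lambda p q M Mf N + s)*(K22 beta sigma lambda p q M Mf N + s)
  - ((1-p)*cc beta sigma lambda p q M Mf N)*((1-q)*cc beta sigma lambda p q M Mf N)
  = ((1-M)*(1-Mf*beta)/lambda - sigma*N + s) *
    ((1-M*(p+q-1))*(1-Mf*beta*(p+q-1))/lambda - sigma*N*(p+q-1) + s).
Proof. intros; unfold K11, K22, cc; field; auto. Qed.

Theorem proposition4 (beta sigma lambda mu psi p q M Mf N eps2 : R) :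
  0 < beta < 1 -> 0 < sigma -> 0 < lambda -> 0 < mu -> 1 < psi ->
  0 < p <= 1 -> 0 < q <= 1 ->
  0 < M <= 1 -> 0 < Mf <= 1 -> 0 < N <= 1 ->
  Rmin M (Rmin Mf N) < 1 ->
  0 <= eps2 ->
  exists ebar : Rbar,
    ebar <> p_infty /\
    (forall eps1 : R,
        BRE_exists beta sigma lambda mu psi p q M Mf N eps1 eps2 <->
        Rbar_le ebar (Finite eps1)) /\
    ((M - 1) * (1 - Mf * beta) + lambda * sigma * N < 0 -> ebar = m_infty).
Proof.
  intros Hb Hs Hl Hm Hpsi Hp Hq HM HMf HN _ He2.
  assert (Hl0 : lambda <> 0) by lra.
  set (m := Mf*beta).
  assert (Hm1 : 0 < m < 1) by (unfold m; split; nra).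
  set (il := /lambda).
  assert (Hil : 0 < il) by (apply Rinv_0_lt_compat; lra).
  set (r := p+q-1).
  assert (Hr : -1 < r <= 1) by (unfold r; lra).
  set (k1 := (1-M)*(1-Mf*beta)/lambda - sigma*N).
  set (kr := (1-M*(p+q-1))*(1-Mf*beta*(p+q-1))/lambda - sigma*N*(p+q-1)).
  set (C := cc beta sigma lambda p q M Mf N).
  set (k11 := K11 beta sigma lambda p q M Mf N).
  set (k22 := K22 beta sigma lambda p q M Mf N).
  assert (HC : 0 < C).
  { unfold C, cc. fold m. unfold Rdiv. fold il.
    assert (0 <= M*(1-m)) by (apply Rmult_le_pos; lra).
    assert (0 <= m*(1-M)) by (apply Rmult_le_pos; lra).
    assert (0 <= M*m*(2-p-q)) by (apply Rmult_le_pos; [apply Rmult_le_pos|]; lra).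
    assert (0 <= M + m - M*m*(p+q)) by lra.
    assert (0 < sigma*N) by nra. nra. }
  assert (Hk11 : 0 < k11 + sigma*psi /\ k1 <= k11).
  { unfold k11, K11, k1. fold m. unfold Rdiv. fold il.
    assert (0 <= 1 - m*p) by nra. assert (0 <= 1 - M*p) by nra.
    assert (1 - m <= 1 - m*p) by nra. assert (1 - M <= 1 - M*p) by nra.
    assert ((1-m)*(1-M) <= (1-m*p)*(1-M*p)) by (apply Rmult_le_compat; nra).
    assert (0 <= M*m*(1-p)*(1-q)) by (apply Rmult_le_pos; [apply Rmult_le_pos|]; nra).
    assert (HsN : 0 < sigma*N) by (apply Rmult_lt_0_compat; lra).
    assert (sigma*N*p <= sigma*N) by nra.
    assert (N*p <= 1) by nra.
    assert (0 < sigma*(psi - N*p)) by (apply Rmult_lt_0_compat; lra).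
    assert (sigma*N*p < sigma*psi) by nra.
    assert ((1-m)*(1-M)*il <= ((1-m*p)*(1-M*p) + M*m*(1-p)*(1-q))*il) by (apply Rmult_le_compat_r; lra).
    assert (0 <= (1-m*p)*(1-M*p)) by (apply Rmult_le_pos; lra).
    assert (0 <= ((1-m*p)*(1-M*p) + M*m*(1-p)*(1-q))*il) by (apply Rmult_le_pos; lra).
    split; lra. }
  assert (Hk22 : 0 < k22 + sigma*psi /\ k1 <= k22).
  { unfold k22, K22, k1. fold m. unfold Rdiv. fold il.
    assert (0 <= 1 - m*q) by nra. assert (0 <= 1 - M*q) by nra.
    assert (1 - m <= 1 - m*q) by nra. assert (1 - M <= 1 - M*q) by nra.
    assert ((1-m)*(1-M) <= (1-m*q)*(1-M*q)) by (apply Rmult_le_compat; nra).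
    assert (0 <= M*m*(1-p)*(1-q)) by (apply Rmult_le_pos; [apply Rmult_le_pos|]; nra).
    assert (HsN : 0 < sigma*N) by (apply Rmult_lt_0_compat; lra).
    assert (sigma*N*q <= sigma*N) by nra.
    assert (N*q <= 1) by nra.
    assert (0 < sigma*(psi - N*q)) by (apply Rmult_lt_0_compat; lra).
    assert (sigma*N*q < sigma*psi) by nra.
    assert ((1-m)*(1-M)*il <= ((1-m*q)*(1-M*q) + M*m*(1-p)*(1-q))*il) by (apply Rmult_le_compat_r; lra).
    assert (0 <= (1-m*q)*(1-M*q)) by (apply Rmult_le_pos; lra).
    assert (0 <= ((1-m*q)*(1-M*q) + M*m*(1-p)*(1-q))*il) by (apply Rmult_le_pos; lra).
    split; lra. }
  assert (Hkr : 0 < kr + sigma*psi /\ k1 <= kr).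
  { unfold kr, k1. fold r m. unfold Rdiv. fold il.
    assert (0 <= 1 - m*r) by nra. assert (0 <= 1 - M*r) by nra.
    assert (1 - m <= 1 - m*r) by nra. assert (1 - M <= 1 - M*r) by nra.
    assert ((1-m)*(1-M) <= (1-m*r)*(1-M*r)) by (apply Rmult_le_compat; nra).
    assert (HsN : 0 < sigma*N) by (apply Rmult_lt_0_compat; lra).
    assert (sigma*N*r <= sigma*N) by nra.
    assert (N*r <= 1) by nra.
    assert (0 < sigma*(psi - N*r)) by (apply Rmult_lt_0_compat; lra).
    assert (sigma*N*r < sigma*psi) by nra.
    assert (0 <= (1-m*r)*(1-M*r)) by (apply Rmult_le_pos; lra).
    assert ((1-m)*(1-M)*il <= ((1-m*r)*(1-M*r))*il) by (apply Rmult_le_compat_r; lra).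
    assert (0 <= ((1-m*r)*(1-M*r))*il) by (apply Rmult_le_pos; lra).
    split; lra. }
  assert (Hk1s : 0 < k1 + sigma*psi).
  { unfold k1. fold m. unfold Rdiv. fold il.
    assert (0 <= (1-M)*(1-m)) by (apply Rmult_le_pos; lra).
    assert (sigma*N < sigma*psi) by nra.
    assert (0 <= (1-M)*(1-m)*il) by (apply Rmult_le_pos; lra). lra. }
  assert (Hdet : forall s, (k11+s)*(k22+s) - ((1-p)*C)*((1-q)*C) = (k1+s)*(kr+s))
    by (intros; apply det_id; auto).
  assert (Hyp : hyps k11 k22 ((1-p)*C) ((1-q)*C) sigma psi mu eps2).
  { repeat split; try lra; try nra. rewrite Hdet. nra. }
  assert (Hcond : (M - 1) * (1 - Mf * beta) + lambda * sigma * N < 0 -> 0 < k1).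
  { intros Hc. unfold k1. fold m in Hc |- *.
    apply Rmult_lt_reg_l with lambda; auto. rewrite Rmult_0_r.
    replace (lambda * ((1 - M) * (1 - m) / lambda - sigma * N)) with ((1-M)*(1-m) - lambda*sigma*N) by (field; lra).
    lra. }
  assert (Hii : (M - 1) * (1 - Mf * beta) + lambda * sigma * N < 0 ->
     forall e, Sa k11 k22 ((1-p)*C) ((1-q)*C) sigma psi mu eps2 e).
  { intros Hc. specialize (Hcond Hc).
    destruct (Req_dec q 1) as [Hq1|Hq1].
    - replace ((1-q)*C) with 0 in * by (rewrite Hq1; ring).
      apply (proj1 (dich_B0 _ _ _ _ _ _ _ Hyp)). lra.
    - apply all_Bpos; auto. apply Rmult_lt_0_compat; lra. lra. lra.
      specialize (Hdet 0). rewrite !Rplus_0_r in Hdet. rewrite Hdet. nra. }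
  assert (Hd : dich (Sa k11 k22 ((1-p)*C) ((1-q)*C) sigma psi mu eps2)).
  { destruct (Req_dec q 1) as [Hq1|Hq1].
    - replace ((1-q)*C) with 0 in * by (rewrite Hq1; ring).
      apply (proj2 (dich_B0 _ _ _ _ _ _ _ Hyp)).
    - apply dich_Bpos; auto. apply Rmult_lt_0_compat; lra. }
  assert (Hiff : forall e, BRE_exists beta sigma lambda mu psi p q M Mf N e eps2 <->
      Sa k11 k22 ((1-p)*C) ((1-q)*C) sigma psi mu eps2 e) by (intros; apply BRE_iff; auto).
  destruct Hd as [Hall | [c Hc]].
  - exists m_infty. split; [discriminate|]. split; [|reflexivity].
    intros e. rewrite Hiff. simpl. split; auto.
  - exists (Finite c). split; [discriminate|]. split.
    + intros e. rewrite Hiff, Hc. simpl. tauto.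
    + intros Hcd. exfalso. specialize (Hii Hcd (c-1)). apply Hc in Hii. lra.
Qed.
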